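(* In the Restricted Grid Scheduling problem, for any finite multiset of items (each of size $S$ or $L$) and any admissible sequence of bins (each of size in $[S,M]$), there exists an optimal thrifty packing that contains no bad bin.
   Context: Fix an integer $S>1$, $L=2S-1$, $M=4S-3$. Items have size $S$ or $L$; bins have integer sizes in $[S,M]$ and arrive in a sequence, which is admissible if it ends with at least as many bins of size $M$ as there are items. A packing assigns every item to a bin with total item size in each bin at most the bin size; used bins are those receiving at least one item; the cost is the sum of sizes of used bins. A packing is valid if each empty bin is smaller than every item packed in a later bin; optimal if valid and of minimum cost among valid packings. A bin is wasteful if its empty space is at least the size of some item packed in a later bin; a packing is thrifty if it has no wasteful bin. A used bin is bad if it contains at least one item of size $S$, its empty space is at least $L-S$, and some item of size $L$ is packed in a later bin. *)

(* Defs.v *)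
From mathcomp Require Import all_boot.
Set Implicit Arguments. Unset Strict Implicit. Unset Printing Implicit Defensive.

Definition Lsz (S : nat) : nat := 2 * S - 1.
Definition Msz (S : nat) : nat := 4 * S - 3.

(* Items: a multiset of sizes, given as a sequence [items];
   bins: a sequence [bins] of sizes, in arrival order. *)
Definition items_ok (S : nat) (items : seq nat) : Prop :=
  all (fun x => (x == S) || (x == Lsz S)) items.
Definition bins_ok (S : nat) (bins : seq nat) : Prop :=
  all (fun b => (S <= b <= Msz S)) bins.
Definition admissible (S : nat) (items bins : seq nat) : Prop :=
  size items <= size bins /\
  all (fun b => b == Msz S) (drop (size bins - size items) bins).

Section Packing.
Variables (S : nat) (items bins : seq nat).
Local Notation n := (size items).
Local Notation m := (size bins).

Definition assignment := {ffun 'I_n -> 'I_m}.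

Definition isize (i : 'I_n) : nat := nth 0 items i.
Definition bsize (j : 'I_m) : nat := nth 0 bins j.

Definition load (p : assignment) (j : 'I_m) : nat :=
  \sum_(i : 'I_n | p i == j) isize i.
Definition used (p : assignment) (j : 'I_m) : bool := [exists i, p i == j].
Definition cost (p : assignment) : nat := \sum_(j : 'I_m | used p j) bsize j.
Definition empty_space (p : assignment) (j : 'I_m) : nat := bsize j - load p j.

Definition packing (p : assignment) : Prop := forall j, load p j <= bsize j.

Definition valid (p : assignment) : Prop :=
  packing p /\
  forall (j : 'I_m) (i : 'I_n), ~~ used p j -> (j < p i)%N -> bsize j < isize i.

Definition optimal (p : assignment) : Prop :=
  valid p /\ forall q : assignment, valid q -> cost p <= cost q.

Definition wasteful (p : assignment) (j : 'I_m) : Prop :=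
  exists i : 'I_n, (j < p i)%N /\ isize i <= empty_space p j.

Definition thrifty (p : assignment) : Prop := forall j, ~ wasteful p j.

Definition bad (p : assignment) (j : 'I_m) : Prop :=
  used p j /\
  (exists i : 'I_n, p i = j /\ isize i = S) /\
  Lsz S - S <= empty_space p j /\
  (exists i : 'I_n, (j < p i)%N /\ isize i = Lsz S).
End Packing.

(* Main.v *)
Require Import Defs.
From mathcomp Require Import all_boot zify.
From Stdlib Require Import Classical.
Set Implicit Arguments. Unset Strict Implicit. Unset Printing Implicit Defensive.

Lemma min_ex (T : Type) (P : T -> Prop) (f : T -> nat) :
  (exists x, P x) -> exists x, P x /\ forall y, P y -> f x <= f y.
Proof.
move=> [x Px].
have : forall N z, f z <= N -> P z -> exists x0, P x0 /\ forall y, P y -> f x0 <= f y.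
  elim=> [|N IH] z Hz Pz.
    exists z; split => // y _; lia.
  case: (classic (exists y, P y /\ f y < f z)) => [[y [Py Hy]]|H].
    apply: (IH y) => //; lia.
  exists z; split => // y Py; case: (leqP (f z) (f y)) => // Hlt.
  by exfalso; apply: H; exists y.
by move=> /(_ (f x) x (leqnn _) Px).
Qed.

Section Pf.
Variables (S : nat) (items bins : seq nat).
Local Notation n := (size items).
Local Notation m := (size bins).
Local Notation A := (assignment items bins).

Definition mv (p : A) (i : 'I_n) (b : 'I_m) : A :=
  [ffun x => if x == i then b else p x].
Definition Phi (p : A) := \sum_(i : 'I_n) isize i * p i.
Definition vexc (p : A) (h : 'I_m) := forall (j : 'I_m) (x : 'I_n),
  j != h -> ~~ used p j -> (j < p x)%N -> bsize j < isize x.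

Lemma usedP (p : A) j : reflect (exists x, p x = j) (used p j).
Proof. by apply: (iffP existsP) => [[x /eqP]|[x <-]]; exists x. Qed.

Lemma used_at (p : A) x : used p (p x).
Proof. by apply/usedP; exists x. Qed.

Lemma used_mv_b (p : A) i b : used (mv p i b) b.
Proof. by apply/usedP; exists i; rewrite ffunE eqxx. Qed.

Lemma used_mv_neq (p : A) i b j : j != b -> j != p i ->
  used (mv p i b) j = used p j.
Proof.
move=> Hb Hi; apply/usedP/usedP => [[x H]|[x Hx]]; exists x.
  by move: H; rewrite ffunE; case: eqP => // _ E; rewrite E eqxx in Hb.
rewrite ffunE; case: eqP => // E; subst x; by rewrite Hx eqxx in Hi.
Qed.

Lemma load_sum (p : A) j : load p j = \sum_x (if p x == j then isize x else 0).
Proof. by rewrite /load big_mkcond. Qed.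

Lemma load_mv (p : A) i b j :
  load (mv p i b) j + (if p i == j then isize i else 0) =
  load p j + (if b == j then isize i else 0).
Proof.
rewrite !load_sum [in LHS](bigD1 i) //= [in RHS](bigD1 i) //= ffunE eqxx.
rewrite (eq_bigr (fun x => if p x == j then isize x else 0)).
  by rewrite addnAC [RHS]addnAC [_ + (if b == j then _ else _)]addnC.
by move=> x /negbTE Hx; rewrite ffunE Hx.
Qed.

Lemma load0 (p : A) j : ~~ used p j -> load p j = 0.
Proof.
move=> /negP Hu; rewrite /load big1 // => x /eqP Hx; exfalso; apply: Hu.
by apply/usedP; exists x.
Qed.

Lemma load_ge1 (p : A) a : isize a <= load p (p a).
Proof. by rewrite load_sum (bigD1 a) //= eqxx; lia. Qed.

Lemma load_ge2 (p : A) a c : a != c -> p a = p c ->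
  isize a + isize c <= load p (p a).
Proof.
move=> Hac Hpc; rewrite load_sum (bigD1 a) //= eqxx (bigD1 c) /=; last by rewrite eq_sym.
rewrite Hpc eqxx; lia.
Qed.

Lemma Phi_mv (p : A) i b : Phi (mv p i b) + isize i * p i = Phi p + isize i * b.
Proof.
rewrite /Phi [in LHS](bigD1 i) //= [in RHS](bigD1 i) //= ffunE eqxx.
rewrite (eq_bigr (fun x => isize x * p x)); first lia.
by move=> x /negbTE H; rewrite ffunE H.
Qed.

Lemma cost_sum (p : A) : cost p = \sum_j used p j * bsize j.
Proof.
rewrite /cost big_mkcond; apply: eq_bigr => j _.
by case: (used p j); rewrite ?mul1n ?mul0n.
Qed.

Lemma cost_ext (p q : A) : (forall j, used q j = used p j) -> cost q = cost p.
Proof. by move=> H; rewrite !cost_sum; apply: eq_bigr => j _; rewrite H. Qed.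

Lemma cost_eq1 (p q : A) a : (forall j, j != a -> used q j = used p j) ->
  cost q + used p a * bsize a = cost p + used q a * bsize a.
Proof.
move=> H; rewrite !cost_sum [in LHS](bigD1 a) //= [in RHS](bigD1 a) //=.
rewrite (eq_bigr (fun j => used p j * bsize j)); first lia.
by move=> j Hj; rewrite H.
Qed.

Lemma cost_eq2 (p q : A) a c : a != c ->
  (forall j, j != a -> j != c -> used q j = used p j) ->
  cost q + used p a * bsize a + used p c * bsize c =
  cost p + used q a * bsize a + used q c * bsize c.
Proof.
move=> Hac H; rewrite !cost_sum [in LHS](bigD1 a) //= [in RHS](bigD1 a) //=.
rewrite [in LHS](bigD1 c) /=; last by rewrite eq_sym.
rewrite [in RHS](bigD1 c) /=; last by rewrite eq_sym.
rewrite (eq_bigr (fun j => used p j * bsize j)); first lia.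
by move=> j /andP [H1 H2]; rewrite H.
Qed.

Lemma mv_pack (q : A) i b : packing q -> load q b + isize i <= bsize b ->
  packing (mv q i b).
Proof.
move=> Hp Hb j; have := load_mv q i b j; have := Hp j.
case: (q i == j); case: (eqVneq b j) => [<-|_] /=; lia.
Qed.

Lemma mv_ve (q : A) (h : 'I_m) (i : 'I_n) (b : 'I_m) : vexc q h -> b < q i -> used (mv q i b) h ->
  vexc (mv q i b) (q i).
Proof.
move=> Hv Hb Hh j x Hj Hu.
have Hjh : j != h by apply/eqP => E; subst; rewrite Hh in Hu.
have Hjb : j != b by apply/eqP => E; subst; rewrite used_mv_b in Hu.
have Hu' : ~~ used q j by rewrite -(used_mv_neq Hjb Hj).
rewrite ffunE; case: eqP => [->|_] Hlt; apply: Hv => //.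
exact: ltn_trans Hlt Hb.
Qed.

Lemma vexc_valid (q : A) h : packing q -> vexc q h -> used q h -> valid q.
Proof.
move=> Hp Hv Hh; split => // j x Hu; apply: Hv => //.
by apply/eqP => E; subst; rewrite Hh in Hu.
Qed.

Lemma valid_vexc (q : A) h : valid q -> vexc q h.
Proof. by move=> [_ H] j x _; apply: H. Qed.

Hypothesis S1 : 1 < S.
Hypothesis Hit : forall i : 'I_n, isize i = S \/ isize i = Lsz S.
Hypothesis Hbin : forall j : 'I_m, S <= bsize j <= Msz S.

Lemma isz_pos (i : 'I_n) : 0 < isize i.
Proof. by case: (Hit i) => ->; rewrite /Lsz; lia. Qed.
Lemma isz_le (i : 'I_n) : isize i <= Msz S.
Proof. by case: (Hit i) => ->; rewrite /Lsz /Msz; lia. Qed.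

Lemma hole (q : A) (h : 'I_m) : packing q -> vexc q h -> ~~ used q h ->
  exists q' : A, valid q' /\ Phi q' <= Phi q /\ cost q' <= cost q + bsize h /\
   ((forall x, h < q x -> isize x = Lsz S) -> Lsz S <= bsize h ->
      cost q' + Lsz S <= cost q + bsize h).
Proof.
have [N] := ubnP (Phi q); elim: N q h => // N IH q h HN Hp Hv Hu.
case: (boolP [exists x, (h < q x) && (isize x <= bsize h)]) =>
   [/existsP [i /andP [Hhi Hsi]] | Hno].
- set q1 := mv q i h.
  have Hp1 : packing q1 by apply: mv_pack => //; rewrite load0.
  have Hh1 : used q1 h := used_mv_b q i h.
  have Hv1 : vexc q1 (q i) := mv_ve Hv Hhi Hh1.
  have HPhi : Phi q1 < Phi q.
    have := Phi_mv q i h.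
    have : isize i * h < isize i * q i by rewrite ltn_pmul2l // isz_pos.
    rewrite -/q1; lia.
  have Hhk : h != q i by rewrite neq_ltn Hhi.
  have Hc := @cost_eq2 q q1 _ _ Hhk (fun j Hj1 Hj2 => used_mv_neq Hj1 Hj2).
  have Hc' : cost q1 + bsize (q i) = cost q + bsize h + used q1 (q i) * bsize (q i).
    rewrite (negbTE Hu) Hh1 used_at /= in Hc; lia.
  have Hq1i : q1 i = h by rewrite ffunE eqxx.
  case: (boolP (used q1 (q i))) => Hk.
  + exists q1; split; first exact: vexc_valid Hp1 Hv1 Hk.
    split; first exact: ltnW.
    rewrite Hk in Hc'; split; first lia.
    move=> HL HLh; exfalso; move/usedP: Hk => [x Hx].
    have Hxi : x != i by apply/eqP => E; subst x; rewrite Hq1i in Hx; rewrite Hx eqxx in Hhk.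
    move: Hx; rewrite ffunE (negbTE Hxi) => Hx.
    have := load_ge2 Hxi Hx; have := Hp (q x); have := Hbin (q x).
    rewrite HL ?Hx // HL // /Lsz /Msz; lia.
  + have HN1 : Phi q1 < N by lia.
    have [q' [Hv' [HP' [Hc1 HL1]]]] := IH q1 (q i) HN1 Hp1 Hv1 Hk.
    rewrite (negbTE Hk) in Hc'.
    exists q'; split => //; split; first lia.
    split; first lia.
    move=> HL HLh.
    have HLk : Lsz S <= bsize (q i).
      by have := load_ge1 q i; have := Hp (q i); rewrite HL //; lia.
    have : cost q' + Lsz S <= cost q1 + bsize (q i).
      apply: HL1 => // x; rewrite ffunE; case: eqP => [_|_] Hx; first lia.
      by apply: HL; exact: ltn_trans Hhi Hx.
    lia.
- exists q; split.
    split => // j x Hju Hjx; case: (eqVneq j h) => [E|Hjh]; last exact: Hv.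
    subst j; rewrite ltnNge; apply/negP => H; move/negP: Hno; apply.
    by apply/existsP; exists x; rewrite Hjx H.
  split => //; split; first lia.
  move=> _ H; lia.
Qed.

Lemma exist_valid (q : A) : packing q -> exists q' : A, valid q'.
Proof.
have [N] := ubnP (Phi q); elim: N q => // N IH q HN Hp.
case: (boolP [exists j, exists x, [&& ~~ used q j, j < q x & isize x <= bsize j]]) =>
   [/existsP [j /existsP [i /and3P [Hju Hji Hsi]]] | Hno].
- set q1 := mv q i j.
  have Hp1 : packing q1 by apply: mv_pack => //; rewrite load0.
  have HPhi : Phi q1 < Phi q.
    have := Phi_mv q i j.
    have : isize i * j < isize i * q i by rewrite ltn_pmul2l // isz_pos.
    rewrite -/q1; lia.
  apply: (IH q1) => //; lia.
- exists q; split => // j x Hju Hjx; rewrite ltnNge; apply/negP => H.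
  move/negP: Hno; apply; apply/existsP; exists j; apply/existsP; exists x.
  by rewrite Hju Hjx H.
Qed.

Lemma main (q0 : A) : packing q0 ->
  exists p : A, optimal p /\ thrifty p /\ (forall j, ~ bad S p j).
Proof.
move=> Hq0.
have [p0 [Hv0 Hmin0]] := @min_ex A (fun q : A => valid q) (fun q : A => cost q) (exist_valid Hq0).
have [p [[Hv Hcp] HminP]] := @min_ex _ (fun q : A => valid q /\ cost q = cost p0) (fun q : A => Phi q)
   (ex_intro _ p0 (conj Hv0 erefl)).
have Hcostmin : forall q : A, valid q -> cost p <= cost q.
  by move=> q Hq; rewrite Hcp; exact: Hmin0.
have Hkey : forall q : A, valid q -> cost q <= cost p -> Phi p <= Phi q.
  move=> q Hq Hc; apply: HminP; split => //; have := Hmin0 q Hq; lia.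
have [Hpk Hvp] := Hv.
exists p; split; first by split.
split.
- move=> j [i [Hji Hsz]].
  have Hload : load p j + isize i <= bsize j.
    by have := Hpk j; rewrite /empty_space in Hsz; lia.
  have Huj : used p j.
    by case: (boolP (used p j)) => // Hu; have := Hvp j i Hu Hji; lia.
  have Hp1 : packing (mv p i j) := mv_pack Hpk Hload.
  have Hh1 : used (mv p i j) j := used_mv_b p i j.
  have Hv1 : vexc (mv p i j) (p i) := mv_ve (@valid_vexc p j Hv) Hji Hh1.
  have HPhi : Phi (mv p i j) < Phi p.
    have := Phi_mv p i j.
    have : isize i * j < isize i * p i by rewrite ltn_pmul2l // isz_pos.
    lia.
  have Hus : forall j', j' != p i -> used (mv p i j) j' = used p j'.
    move=> j' Hj'; case: (eqVneq j' j) => [->|Hjj]; first by rewrite Hh1 Huj.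
    exact: used_mv_neq.
  have Hc := cost_eq1 Hus; rewrite used_at in Hc.
  case: (boolP (used (mv p i j) (p i))) => Hk.
  + have Hvq := vexc_valid Hp1 Hv1 Hk; rewrite Hk in Hc.
    have := Hkey _ Hvq; lia.
  + rewrite (negbTE Hk) /= in Hc.
    have [q' [Hv' [HP' [Hc' _]]]] := hole Hp1 Hv1 Hk.
    have := Hkey q' Hv'; lia.
- move=> j [Huj [[i0 [Hi0j Hi0S]] [Hemp [i1 [Hji1 Hi1L]]]]].
  have Hi01 : i0 != i1.
    by apply/eqP => E; move: Hi0S Hi1L; rewrite E => ->; rewrite /Lsz; lia.
  have Hjk : j != p i1 by rewrite neq_ltn Hji1.
  have HloadJ : load p j + (Lsz S - S) <= bsize j.
    by have := Hpk j; rewrite /empty_space in Hemp; lia.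
  case: (boolP [forall x : 'I_m, (x < p i1) ==> used p x]) => Hall.
  + have Hmid : (mv p i0 (p i1)) i1 = p i1 by rewrite ffunE eq_sym (negbTE Hi01).
    have Hqi1 : (mv (mv p i0 (p i1)) i1 j) i1 = j by rewrite ffunE eqxx.
    have Hqi0 : (mv (mv p i0 (p i1)) i1 j) i0 = p i1.
      by rewrite !ffunE (negbTE Hi01) eqxx.
    have Hqx : forall x, x != i0 -> x != i1 -> (mv (mv p i0 (p i1)) i1 j) x = p x.
      by move=> x H0 H1; rewrite !ffunE (negbTE H0) (negbTE H1).
    have Hl y : load (mv (mv p i0 (p i1)) i1 j) y + (if p i1 == y then Lsz S else 0)
                + (if j == y then S else 0)
              = load p y + (if p i1 == y then S else 0) + (if j == y then Lsz S else 0).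
      have := load_mv p i0 (p i1) y; have := load_mv (mv p i0 (p i1)) i1 j y.
      rewrite Hmid Hi0j Hi0S Hi1L; lia.
    have Hpq : packing (mv (mv p i0 (p i1)) i1 j).
      move=> y; have := Hl y; have := Hpk y; have := Hpk (p i1).
      rewrite /Lsz in HloadJ *.
      case: (eqVneq (p i1) y) => [<-|H1]; first by rewrite (negbTE Hjk) /=; lia.
      case: (eqVneq j y) => [<-|H2] /=; lia.
    have Hus : forall y, used (mv (mv p i0 (p i1)) i1 j) y = used p y.
      move=> y; case: (eqVneq y j) => [->|Hyj].
        by rewrite Huj; apply/usedP; exists i1.
      case: (eqVneq y (p i1)) => [->|Hyk].
        by rewrite used_at; apply/usedP; exists i0.
      by rewrite used_mv_neq ?Hmid // used_mv_neq // Hi0j.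
    have Hvq : valid (mv (mv p i0 (p i1)) i1 j).
      split => // y x Hyu; rewrite Hus in Hyu.
      have Hky : p i1 <= y.
        rewrite leqNgt; apply/negP => H; move/forallP: Hall => /(_ y).
        by rewrite H /= (negbTE Hyu).
      case: (eqVneq x i1) => [->|H1]; first by rewrite Hqi1; lia.
      case: (eqVneq x i0) => [->|H0]; first by rewrite Hqi0; lia.
      rewrite Hqx //; exact: Hvp.
    have HPhi : Phi (mv (mv p i0 (p i1)) i1 j) < Phi p.
      have := Phi_mv p i0 (p i1); have := Phi_mv (mv p i0 (p i1)) i1 j.
      rewrite Hmid Hi0j Hi0S Hi1L /Lsz.
      have : j < p i1 := Hji1.
      nia.
    have := Hkey _ Hvq; rewrite (cost_ext Hus) => /(_ (leqnn _)); lia.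
  + move/forallPn: Hall => [x0]; rewrite negb_imply => /andP [Hx0k Hx0u].
    case: (@arg_minnP _ x0 (fun y => ~~ used p y) val Hx0u) => j' Hj'u Hmin.
    have Hj'k : j' < p i1 := leq_ltn_trans (Hmin x0 Hx0u) Hx0k.
    have Hbj' : bsize j' < Lsz S by rewrite -Hi1L; exact: Hvp.
    have HjJ : j < j'.
      rewrite ltnNge; apply/negP => H; case: (eqVneq j' j) => [E|Hne].
        by rewrite E Huj in Hj'u.
      have H' : j' < p i0 by rewrite Hi0j ltn_neqAle Hne H.
      by have := Hvp j' i0 Hj'u H'; have := Hbin j'; rewrite Hi0S; lia.
    have Hj'k' : j' != p i1 by rewrite neq_ltn Hj'k.
    have Hj'j : j' != j by rewrite neq_ltn HjJ orbT.
    have HallL : forall x, j' < p x -> isize x = Lsz S.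
      move=> x Hx; have := Hvp j' x Hj'u Hx; have := Hbin j'.
      by case: (Hit x) => ->; lia.
    have Hmid : (mv p i0 j') i1 = p i1 by rewrite ffunE eq_sym (negbTE Hi01).
    have Hqi1 : (mv (mv p i0 j') i1 j) i1 = j by rewrite ffunE eqxx.
    have Hqi0 : (mv (mv p i0 j') i1 j) i0 = j'.
      by rewrite !ffunE (negbTE Hi01) eqxx.
    have Hqx : forall x, x != i0 -> x != i1 -> (mv (mv p i0 j') i1 j) x = p x.
      by move=> x H0 H1; rewrite !ffunE (negbTE H0) (negbTE H1).
    have Hl0 : load p j' = 0 by rewrite load0.
    have Hl y : load (mv (mv p i0 j') i1 j) y + (if p i1 == y then Lsz S else 0)
                + (if j == y then S else 0)
              = load p y + (if j' == y then S else 0) + (if j == y then Lsz S else 0).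
      have := load_mv p i0 j' y; have := load_mv (mv p i0 j') i1 j y.
      rewrite Hmid Hi0j Hi0S Hi1L => H1 H2; rewrite H1 -H2; lia.
    have Hp1 : packing (mv (mv p i0 j') i1 j).
      move=> y; have := Hl y; have := Hpk y; have := Hpk (p i1); have := Hbin j'.
      rewrite /Lsz in HloadJ *.
      case: (eqVneq (p i1) y) => [<-|H1].
        by rewrite (negbTE Hjk) (negbTE Hj'k') /=; lia.
      case: (eqVneq j y) => [<-|H2]; first by rewrite (negbTE Hj'j) /=; lia.
      case: (eqVneq j' y) => [<-|H3] /=; lia.
    have Hk1 : ~~ used (mv (mv p i0 j') i1 j) (p i1).
      apply/negP => /usedP [x].
      case: (eqVneq x i1) => [->|H1]; first by rewrite Hqi1 => E; rewrite E eqxx in Hjk.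
      case: (eqVneq x i0) => [->|H0]; first by rewrite Hqi0 => E; rewrite E eqxx in Hj'k'.
      rewrite Hqx // => Hx.
      have := load_ge2 H1 Hx; have := Hpk (p x); have := Hbin (p x).
      rewrite HallL; last by rewrite Hx.
      rewrite Hi1L /Lsz /Msz; lia.
    have Hv1 : vexc (mv (mv p i0 j') i1 j) (p i1).
      move=> y x Hyk Hyu Hyx.
      have Hyj : y != j.
        apply/eqP => E; rewrite E in Hyu; move/negP: Hyu; apply; apply/usedP; exists i1; exact: Hqi1.
      have Hyj' : y != j'.
        apply/eqP => E; rewrite E in Hyu; move/negP: Hyu; apply; apply/usedP; exists i0; exact: Hqi0.
      have E1 : used (mv p i0 j') y = used p y.
        by apply: used_mv_neq => //; rewrite Hi0j.
      have E2 : used (mv (mv p i0 j') i1 j) y = used (mv p i0 j') y.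
        by apply: used_mv_neq => //; rewrite Hmid.
      rewrite E2 E1 in Hyu.
      move: Hyx; case: (eqVneq x i1) => [->|H1].
        by rewrite Hqi1 => H; apply: Hvp => //; exact: ltn_trans H Hji1.
      case: (eqVneq x i0) => [->|H0].
        by rewrite Hqi0 => H; have := Hmin y Hyu; rewrite leqNgt H.
      by rewrite Hqx // => H; apply: Hvp.
    have HallL1 : forall x, p i1 < (mv (mv p i0 j') i1 j) x -> isize x = Lsz S.
      move=> x; case: (eqVneq x i1) => [->|H1]; first by rewrite Hqi1 => H; have := ltn_trans Hji1 H; rewrite ltnn.
      case: (eqVneq x i0) => [->|H0]; first by rewrite Hqi0 => H; have := ltn_trans Hj'k H; rewrite ltnn.
      by rewrite Hqx // => H; apply: HallL; exact: ltn_trans Hj'k H.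
    have Lk : Lsz S <= bsize (p i1).
      by rewrite -Hi1L; exact: leq_trans (load_ge1 p i1) (Hpk (p i1)).
    have Hus : forall y, y != j' -> y != p i1 ->
        used (mv (mv p i0 j') i1 j) y = used p y.
      move=> y Hy1 Hy2; case: (eqVneq y j) => [->|Hyj].
        by rewrite Huj; apply/usedP; exists i1.
      by rewrite used_mv_neq ?Hmid // used_mv_neq // Hi0j.
    have Hu1j' : used (mv (mv p i0 j') i1 j) j' by apply/usedP; exists i0.
    have Hc := cost_eq2 Hj'k' Hus.
    rewrite (negbTE Hj'u) used_at (negbTE Hk1) Hu1j' /= in Hc.
    have [q' [Hv' [_ [_ HL']]]] := hole Hp1 Hv1 Hk1.
    have H1 := HL' HallL1 Lk; have H2 := Hcostmin q' Hv'.
    clear -H1 H2 Hc Hbj'; lia.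
Qed.

End Pf.

Lemma init_pack (S : nat) (items bins : seq nat) :
  (forall i : 'I_(size items), isize i <= Msz S) ->
  size items <= size bins ->
  (forall j : 'I_(size bins), size bins - size items <= j -> bsize j = Msz S) ->
  exists q : assignment items bins, packing q.
Proof.
move=> Hle Hnm HM.
have Hlt : forall i : 'I_(size items), size bins - size items + i < size bins.
  by move=> i; have := ltn_ord i; lia.
exists [ffun i => Ordinal (Hlt i)] => j.
case: (boolP [exists x : 'I_(size items), size bins - size items + x == j]) =>
   [/existsP [x /eqP Hx]|Hno].
- rewrite /load (big_pred1 x).
    by rewrite HM; [exact: Hle | rewrite -Hx; lia].
  move=> y /=; rewrite ffunE; apply/eqP/eqP => [E|->].
    by apply: val_inj; have := congr1 val E => /=; lia.
  by apply: val_inj => /=.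
- rewrite /load big_pred0 // => y; rewrite ffunE; apply/negP => /eqP E.
  move/negP: Hno; apply; apply/existsP; exists y; apply/eqP; by rewrite -E.
Qed.

Theorem lemma3 (S : nat) (items bins : seq nat) :
  1 < S ->
  items_ok S items ->
  bins_ok S bins ->
  admissible S items bins ->
  exists p : assignment items bins,
    optimal p /\ thrifty p /\ (forall j, ~ bad S p j).
Proof.
move=> S1 Hio Hbo [Hnm Hadm].
have Hit : forall i : 'I_(size items), isize i = S \/ isize i = Lsz S.
  move=> i; have := allP Hio _ (mem_nth 0 (ltn_ord i)).
  by rewrite /isize => /orP [/eqP|/eqP] ->; [left|right].
have Hbin : forall j : 'I_(size bins), S <= bsize j <= Msz S.
  by move=> j; exact: (allP Hbo _ (mem_nth 0 (ltn_ord j))).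
have HM : forall j : 'I_(size bins), size bins - size items <= j -> bsize j = Msz S.
  move=> j Hj; apply/eqP; apply: (allP Hadm).
  rewrite /bsize -(subnKC Hj) -nth_drop; apply: mem_nth; rewrite size_drop.
  have Hs : (j - (size bins - size items) < size bins - (size bins - size items))%N.
    by move: (ltn_ord j) Hj; clear; lia.
  exact: Hs.
have Hle : forall i : 'I_(size items), isize i <= Msz S.
  by move=> i; case: (Hit i) => ->; rewrite /Lsz /Msz; lia.
have [q0 Hq0] := init_pack Hle Hnm HM.
exact: (main S1 Hit Hbin Hq0).
Qed.
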